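(* Let $G$ be a regular subsequential method of sequential convergence, and let $f:\mathbb{R}\to\mathbb{R}$ be Abel continuous. Then $f$ is $G$-continuous.
   Context: Let $s$ denote the space of all real sequences and $c$ the space of convergent real sequences. A method of sequential convergence is a linear function $G$ defined on a linear subspace $c_G$ of $s$ with values in $\mathbb{R}$; a sequence $\mathbf{p}$ is $G$-convergent to $\ell$ if $\mathbf{p}\in c_G$ and $G(\mathbf{p})=\ell$. $G$ is regular if every convergent sequence $\mathbf{p}$ belongs to $c_G$ and $G(\mathbf{p})=\lim\mathbf{p}$. $G$ is subsequential if whenever $G(\mathbf{p})=\ell$ there is a subsequence $(p_{n_k})$ of $\mathbf{p}$ with $\lim_k p_{n_k}=\ell$. $f$ is $G$-continuous if for every $G$-convergent sequence $\mathbf{p}=(p_n)$, the sequence $f(\mathbf{p})=(f(p_n))$ is $G$-convergent and $G(f(\mathbf{p}))=f(G(\mathbf{p}))$. A sequence $(p_n)$ is Abel convergent to $\ell$ if $\sum_{k=0}^{\infty}p_k x^k$ converges for every $0\le x<1$ and $\lim_{x\to1^-}(1-x)\sum_{k=0}^\infty p_kx^k=\ell$; $f$ is Abel continuous if $(f(p_n))$ is Abel convergent to $f(\ell)$ whenever $(p_n)$ is Abel convergent to $\ell$. *)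

(* Defs.v *)
From Stdlib Require Import Reals.
From Coquelicot Require Import Coquelicot.
Open Scope R_scope.

(* A method of sequential convergence: a linear subspace cG of the space of
   real sequences (given as a predicate) and a linear functional G on it. *)
Definition is_method (cG : (nat -> R) -> Prop) (G : (nat -> R) -> R) : Prop :=
  cG (fun _ => 0) /\
  (forall p q, cG p -> cG q -> cG (fun n => p n + q n)) /\
  (forall (a : R) p, cG p -> cG (fun n => a * p n)) /\
  (forall p q, cG p -> cG q -> G (fun n => p n + q n) = G p + G q) /\
  (forall (a : R) p, cG p -> G (fun n => a * p n) = a * G p).

Definition G_convergent (cG : (nat -> R) -> Prop) (G : (nat -> R) -> R)
  (p : nat -> R) (l : R) : Prop := cG p /\ G p = l.

Definition regular (cG : (nat -> R) -> Prop) (G : (nat -> R) -> R) : Prop :=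
  forall (p : nat -> R) (l : R), is_lim_seq p (Finite l) -> G_convergent cG G p l.

Definition subsequential (cG : (nat -> R) -> Prop) (G : (nat -> R) -> R) : Prop :=
  forall (p : nat -> R) (l : R), G_convergent cG G p l ->
    exists phi : nat -> nat, (forall k, (phi k < phi (S k))%nat) /\
      is_lim_seq (fun k => p (phi k)) (Finite l).

Definition G_continuous (cG : (nat -> R) -> Prop) (G : (nat -> R) -> R)
  (f : R -> R) : Prop :=
  forall p : nat -> R, cG p ->
    G_convergent cG G (fun n => f (p n)) (f (G p)).

Definition Abel_convergent (p : nat -> R) (l : R) : Prop :=
  (forall x : R, 0 <= x < 1 -> ex_series (fun k => p k * x ^ k)) /\
  filterlim (fun x => (1 - x) * Series (fun k => p k * x ^ k))
            (at_left 1) (locally l).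

Definition Abel_continuous (f : R -> R) : Prop :=
  forall (p : nat -> R) (l : R), Abel_convergent p l ->
    Abel_convergent (fun n => f (p n)) (f l).

(* Main.v *)
Require Import Defs.
From Stdlib Require Import Reals.
From Coquelicot Require Import Coquelicot.
From Stdlib Require Import Lra Lia FunctionalExtensionality.
Open Scope R_scope.

Lemma abel_lim_helper (F : R -> R) (L K : R) :
  (forall x, 0 < x < 1 -> Rabs (F x - L) <= K * (1 - x)) ->
  filterlim F (at_left 1) (locally L).
Proof.
  intros HF.
  apply filterlim_locally; intro eps.
  assert (Hd : 0 < Rmin 1 (eps / (Rabs K + 1))).
  { apply Rmin_pos; [lra|]. apply Rdiv_lt_0_compat; [apply cond_pos|].
    pose proof (Rabs_pos K); lra. }
  exists (mkposreal _ Hd). intros y Hy Hylt.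
  change (Rabs (y - 1) < Rmin 1 (eps / (Rabs K + 1))) in Hy.
  change (Rabs (F y - L) < eps).
  pose proof (Rmin_l 1 (eps / (Rabs K + 1))) as H1.
  pose proof (Rmin_r 1 (eps / (Rabs K + 1))) as H2.
  set (d := Rmin 1 (eps / (Rabs K + 1))) in *.
  rewrite Rabs_left in Hy by lra.
  assert (Hy0 : 0 < y < 1) by lra.
  pose proof (HF y Hy0) as Hb.
  pose proof (Rabs_pos K) as HK.
  assert (K * (1 - y) <= Rabs K * (1 - y)).
  { apply Rmult_le_compat_r; [lra| apply Rle_abs]. }
  assert (Rabs K * (1 - y) <= Rabs K * d) by (apply Rmult_le_compat_l; lra).
  assert ((Rabs K + 1) * d <= eps).
  { apply Rle_trans with ((Rabs K + 1) * (eps / (Rabs K + 1))).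
    apply Rmult_le_compat_l; [lra | exact H2]. right; field; lra. }
  nra.
Qed.

Lemma abel_alt (A B : R) : Abel_convergent (fun k => A + B * (-1) ^ k) A.
Proof.
  assert (HS : forall x, 0 <= x < 1 ->
    is_series (fun k => (A + B * (-1) ^ k) * x ^ k) (A / (1 - x) + B / (1 + x))).
  { intros x Hx.
    assert (H1 : is_series (fun k => x ^ k) (/ (1 - x))).
    { apply is_series_geom. rewrite Rabs_pos_eq; lra. }
    assert (H2 : is_series (fun k => (- x) ^ k) (/ (1 - - x))).
    { apply is_series_geom. rewrite Rabs_Ropp, Rabs_pos_eq; lra. }
    pose proof (is_series_plus _ _ _ _ (is_series_scal A _ _ H1) (is_series_scal B _ _ H2)) as H.
    replace (A / (1 - x) + B / (1 + x)) with
      (plus (scal A (/ (1 - x))) (scal B (/ (1 - - x)))).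
    2:{ change (A * / (1 - x) + B * / (1 - - x) = A / (1 - x) + B / (1 + x)).
        unfold Rdiv. replace (1 - - x) with (1 + x) by ring. reflexivity. }
    apply is_series_ext with (2 := H). intro n.
    change (A * x ^ n + B * (- x) ^ n = (A + B * (-1) ^ n) * x ^ n).
    replace (- x) with (-1 * x) by ring. rewrite Rpow_mult_distr. ring. }
  split.
  - intros x Hx. eexists. apply HS; exact Hx.
  - apply abel_lim_helper with (K := Rabs B).
    intros x Hx.
    rewrite (is_series_unique _ _ (HS x ltac:(lra))).
    replace ((1 - x) * (A / (1 - x) + B / (1 + x)) - A) with (B * ((1 - x) / (1 + x)))
      by (field; lra).
    rewrite Rabs_mult. apply Rmult_le_compat_l; [apply Rabs_pos|].
    rewrite Rabs_pos_eq.
    2:{ apply Rdiv_le_0_compat; lra. }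
    apply Rmult_le_reg_r with (1 + x); [lra|].
    unfold Rdiv. rewrite Rmult_assoc, Rinv_l by lra. nra.
Qed.

Lemma abel_small (p : nat -> R) :
  (forall k, Rabs (p k) <= (/ 2) ^ k) -> Abel_convergent p 0.
Proof.
  intros Hp.
  assert (Hg : is_series (fun k => (/ 2) ^ k) 2).
  { assert (G : is_series (fun k => (/ 2) ^ k) (/ (1 - / 2))).
    { apply is_series_geom. rewrite Rabs_pos_eq; lra. }
    replace (/ (1 - / 2)) with 2 in G by field. exact G. }
  assert (Hb : forall x, -1 < x < 1 -> forall k, Rabs (p k * x ^ k) <= (/ 2) ^ k).
  { intros x Hx k. rewrite Rabs_mult, <- RPow_abs.
    rewrite <- (Rmult_1_r ((/2)^k)). apply Rmult_le_compat; try apply Rabs_pos.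
    apply pow_le, Rabs_pos. apply Hp.
    rewrite <- (pow1 k). apply pow_incr. split; [apply Rabs_pos|].
    apply Rabs_le; lra. }
  assert (Hex : forall x, -1 < x < 1 -> ex_series (fun k => p k * x ^ k)).
  { intros x Hx. apply (@ex_series_le R_AbsRing R_CompleteNormedModule) with (b := fun k => (/2)^k).
    intro n. apply Hb; exact Hx. eexists; exact Hg. }
  split.
  - intros x Hx. apply Hex; lra.
  - apply abel_lim_helper with (K := 2).
    intros x Hx. rewrite Rminus_0_r, Rabs_mult, Rabs_pos_eq by lra.
    rewrite Rmult_comm. apply Rmult_le_compat_r; [lra|].
    assert (Hx' : -1 < x < 1) by lra.
    assert (Hea : ex_series (fun n => Rabs (p n * x ^ n))).
    { apply (@ex_series_le R_AbsRing R_CompleteNormedModule) with (b := fun k => (/2)^k).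
      intro n. change (Rabs (Rabs (p n * x ^ n)) <= (/2)^n).
      rewrite Rabs_Rabsolu. apply Hb; exact Hx'. eexists; exact Hg. }
    eapply Rle_trans. apply Series_Rabs; exact Hea.
    rewrite <- (is_series_unique _ _ Hg).
    apply Series_le. intro n. split; [apply Rabs_pos| apply Hb; exact Hx'].
    eexists; exact Hg.
Qed.

Lemma abel_unique (p : nat -> R) (l1 l2 : R) :
  Abel_convergent p l1 -> Abel_convergent p l2 -> l1 = l2.
Proof.
  intros [_ H1] [_ H2].
  exact (filterlim_locally_unique (F := at_left 1) _ l1 l2 H1 H2).
Qed.

Lemma pow_m1 (k : nat) : (-1) ^ k = 1 \/ (-1) ^ k = -1.
Proof.
  induction k as [|k IH]; simpl; [left; ring|].
  destruct IH as [H|H]; rewrite H; [right|left]; ring.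
Qed.

Lemma jensen (f : R -> R) : Abel_continuous f ->
  forall a b, f (a + b) + f (a - b) = 2 * f a.
Proof.
  intros Hf a b.
  pose proof (Hf _ _ (abel_alt a b)) as H.
  set (C := (f (a + b) + f (a - b)) / 2).
  set (D := (f (a + b) - f (a - b)) / 2).
  assert (E : (fun n => f (a + b * (-1) ^ n)) = (fun k => C + D * (-1) ^ k)).
  { apply functional_extensionality; intro k.
    destruct (pow_m1 k) as [e|e]; rewrite e; unfold C, D.
    - replace (a + b * 1) with (a + b) by ring. field.
    - replace (a + b * -1) with (a - b) by ring. field. }
  change (Abel_convergent (fun n => f (a + b * (-1) ^ n)) (f a)) in H.
  rewrite E in H.
  pose proof (abel_unique _ _ _ H (abel_alt C D)) as U.
  unfold C in U. lra.
Qed.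

Theorem corollary5 (cG : (nat -> R) -> Prop) (G : (nat -> R) -> R) (f : R -> R) :
  is_method cG G -> regular cG G -> subsequential cG G ->
  Abel_continuous f -> G_continuous cG G f.
Proof.
  intros HM HR _ Hf.
  pose proof (jensen f Hf) as J.
  set (c := f 1 - f 0).
  set (h := fun x => f x - f 0 - c * x).
  assert (Hadd : forall u v, h (u + v) = h u + h v).
  { intros u v. unfold h.
    pose proof (J ((u + v) / 2) ((u - v) / 2)) as J1.
    pose proof (J ((u + v) / 2) ((u + v) / 2)) as J2.
    replace ((u + v) / 2 + (u - v) / 2) with u in J1 by field.
    replace ((u + v) / 2 - (u - v) / 2) with v in J1 by field.
    replace ((u + v) / 2 + (u + v) / 2) with (u + v) in J2 by field.
    replace ((u + v) / 2 - (u + v) / 2) with 0 in J2 by field.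
    lra. }
  assert (H0 : h 0 = 0) by (unfold h; ring).
  assert (H1 : h 1 = 0) by (unfold h, c; ring).
  assert (Hopp : forall x, h (- x) = - h x).
  { intro x. pose proof (Hadd x (- x)) as E. rewrite Rplus_opp_r, H0 in E. lra. }
  assert (Hnat : forall n x, h (INR n * x) = INR n * h x).
  { induction n as [|n IH]; intro x.
    - simpl. rewrite Rmult_0_l. rewrite H0. ring.
    - rewrite S_INR. rewrite Rmult_plus_distr_r, Rmult_1_l, Hadd, IH. ring. }
  assert (Hint : forall z, h (IZR z) = 0).
  { intro z. destruct z as [|q|q].
    - exact H0.
    - change (IZR (Z.pos q)) with (IPR q). rewrite <- INR_IPR.
      rewrite <- (Rmult_1_r (INR _)), Hnat, H1. ring.
    - rewrite IZR_NEG, Hopp. change (IZR (Z.pos q)) with (IPR q). rewrite <- INR_IPR.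
      rewrite <- (Rmult_1_r (INR _)), Hnat, H1. ring. }
  assert (Hpow : forall (m : nat) k x, h (INR m ^ k * x) = INR m ^ k * h x).
  { intros m k x. rewrite <- pow_INR. apply Hnat. }
  assert (Hh : forall x, h x = 0).
  { intro x.
    set (t := fun k : nat => (IZR (up (8 ^ k * x)) - 8 ^ k * x) / 2 ^ k).
    assert (Ht : forall k, Rabs (t k) <= (/ 2) ^ k).
    { intro k. unfold t. destruct (archimed (8 ^ k * x)) as [a1 a2].
      assert (P : 0 < 2 ^ k) by (apply pow_lt; lra).
      unfold Rdiv. rewrite Rabs_mult, Rabs_pos_eq by lra.
      rewrite Rabs_pos_eq by (apply Rlt_le, Rinv_0_lt_compat, P).
      rewrite pow_inv. rewrite <- (Rmult_1_l (/ 2 ^ k)) at 2.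
      apply Rmult_le_compat_r; [left; apply Rinv_0_lt_compat, P| lra]. }
    assert (Hht : forall k, h (t k) = - 4 ^ k * h x).
    { intro k.
      assert (P : 0 < 2 ^ k) by (apply pow_lt; lra).
      assert (E : 2 ^ k * t k = IZR (up (8 ^ k * x)) + - (8 ^ k * x)).
      { unfold t. field. lra. }
      assert (E2 : h (2 ^ k * t k) = 2 ^ k * h (t k)).
      { replace 2 with (INR 2) by (simpl; ring). apply Hpow. }
      assert (E3 : h (8 ^ k * x) = 8 ^ k * h x).
      { replace 8 with (INR 8) by (simpl; ring). apply Hpow. }
      rewrite E, Hadd, Hint, Hopp, E3 in E2.
      assert (E4 : 8 ^ k = 2 ^ k * 4 ^ k).
      { rewrite <- Rpow_mult_distr. f_equal; ring. }
      rewrite E4 in E2.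
      apply Rmult_eq_reg_l with (2 ^ k); [|lra]. lra. }
    pose proof (Hf _ _ (abel_small t Ht)) as [Hs _].
    assert (Hq : 0 <= / 4 < 1) by lra.
    pose proof (ex_series_lim_0 _ (Hs _ Hq)) as L.
    set (K := Rabs (f 0) + Rabs c).
    assert (Hle : forall k, Rabs (h x) <= Rabs (f (t k) * (/ 4) ^ k) + K * (/ 4) ^ k).
    { intro k.
      assert (Ef : f (t k) = h (t k) + f 0 + c * t k) by (unfold h; ring).
      assert (P4 : 4 ^ k * (/ 4) ^ k = 1).
      { rewrite <- Rpow_mult_distr. replace (4 * / 4) with 1 by field. apply pow1. }
      assert (Hq0 : 0 < (/ 4) ^ k) by (apply pow_lt; lra).
      assert (Htk : Rabs (t k) <= 1).
      { eapply Rle_trans. apply Ht. rewrite <- (pow1 k). apply pow_incr. lra. }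
      assert (Ex : - h x = f (t k) * (/ 4) ^ k - (f 0 + c * t k) * (/ 4) ^ k).
      { rewrite Ef, Hht. replace ((- 4 ^ k * h x + f 0 + c * t k) * (/ 4) ^ k)
          with (- h x * (4 ^ k * (/ 4) ^ k) + (f 0 + c * t k) * (/ 4) ^ k) by ring.
        rewrite P4. ring. }
      rewrite <- Rabs_Ropp, Ex.
      eapply Rle_trans. apply Rabs_triang. rewrite Rabs_Ropp.
      apply Rplus_le_compat_l. rewrite Rabs_mult, (Rabs_pos_eq ((/4)^k)) by lra.
      apply Rmult_le_compat_r; [lra|]. unfold K.
      eapply Rle_trans. apply Rabs_triang. apply Rplus_le_compat_l.
      rewrite Rabs_mult. rewrite <- (Rmult_1_r (Rabs c)) at 2.
      apply Rmult_le_compat_l; [apply Rabs_pos| exact Htk]. }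
    assert (L2 : is_lim_seq (fun k => Rabs (f (t k) * (/ 4) ^ k) + K * (/ 4) ^ k) 0).
    { replace (Finite 0) with (Finite (Rabs 0 + K * 0)).
      2:{ f_equal. rewrite Rabs_R0. ring. }
      apply is_lim_seq_plus'. apply (is_lim_seq_abs _ 0 L).
      apply (is_lim_seq_scal_l _ K 0). apply is_lim_seq_geom. rewrite Rabs_pos_eq; lra. }
    pose proof (is_lim_seq_le _ _ _ _ Hle (is_lim_seq_const (Rabs (h x))) L2) as Z.
    simpl in Z. pose proof (Rabs_pos (h x)).
    apply Rabs_eq_0. lra. }
  assert (Hfl : forall x, f x = c * x + f 0).
  { intro x. pose proof (Hh x) as E. unfold h in E. lra. }
  destruct HM as [_ [Hplus [Hscal [Gplus Gscal]]]].
  intros p Hp.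
  assert (Ef : (fun n => f (p n)) = (fun n => (fun n => c * p n) n + (fun _ => f 0) n)).
  { apply functional_extensionality; intro n. apply Hfl. }
  destruct (HR (fun _ => f 0) (f 0) (is_lim_seq_const _)) as [Hc Gc].
  rewrite Ef. split.
  - apply Hplus; [apply Hscal, Hp | exact Hc].
  - rewrite Gplus, Gscal, Gc by (try apply Hscal; assumption).
    symmetry; apply Hfl.
Qed.
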